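(* $m_5(6)\geq 20$. Specifically, the $6$-uniform family $\mathcal T_0\circ\binom{[3]}{2}$ (with $300$ edges) is intersecting, has covering number $6$, and satisfies $\gamma_5\big(\mathcal T_0\circ\binom{[3]}{2}\big)\geq 20$.
   Context: $\mathcal T_0\subset\binom{[6]}{3}$ is $\{\{1,2,3\},\{1,2,4\},\{3,4,5\},\{3,4,6\},\{1,5,6\},\{2,5,6\},\{1,3,5\},\{2,4,5\},\{1,4,6\},\{2,3,6\}\}$. Wreath product: for $\mathcal A\subset 2^X$, $\mathcal B\subset 2^{[n]}$, take disjoint copies $X_1,\dots,X_n$ of $X$ with copies $\mathcal A_i$ of $\mathcal A$; for $B=\{i_1,\dots,i_r\}\in\mathcal B$ let $\mathcal A^B=\{A_{i_1}\cup\dots\cup A_{i_r}:A_{i_s}\in\mathcal A_{i_s}\}$, and $\mathcal A\circ\mathcal B=\bigcup_{B\in\mathcal B}\mathcal A^B$. For a family $\mathcal F$ on ground set $Z$, $\gamma_j(\mathcal F)=\min_{S\subset Z,|S|=j}|\{F\in\mathcal F:F\cap S=\emptyset\}|$; $\tau$ is the minimum size of a set meeting all members. $m_j(k)$ is the maximum of $\gamma_j(\mathcal F)$ over all intersecting $k$-uniform families $\mathcal F$ with $\tau(\mathcal F)=k$. *)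

(* Defs.v *)
From mathcomp Require Import all_boot.
Set Implicit Arguments. Unset Strict Implicit. Unset Printing Implicit Defensive.

Section Families.
Variable T : finType.

Definition uniform (k : nat) (F : {set {set T}}) : Prop :=
  forall E, E \in F -> #|E| = k.

Definition intersecting (F : {set {set T}}) : Prop :=
  forall E E', E \in F -> E' \in F -> ~~ [disjoint E & E'].

(* covering number: minimum size of a set meeting all members
   (default #|T| if no such set exists, which cannot happen when set0 \notin F) *)
Definition tau (F : {set {set T}}) : nat :=
  \big[minn/#|T|]_(S : {set T} | [forall E in F, ~~ [disjoint E & S]]) #|S|.

(* gamma_j(F) = min over j-subsets S of the ground set of the number of
   members disjoint from S (default #|F| if j > #|T|) *)
Definition gamma (j : nat) (F : {set {set T}}) : nat :=
  \big[minn/#|F|]_(S : {set T} | #|S| == j) #|[set E in F | [disjoint E & S]]|.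
End Families.

(* m_j(k) >= c : some intersecting k-uniform family F (on some finite ground
   set) with tau(F) = k has gamma_j(F) >= c. *)
Definition m_ge (j k c : nat) : Prop :=
  exists (Z : finType) (F : {set {set Z}}),
    [/\ uniform k F, intersecting F, tau F = k & c <= gamma j F].

(* Wreath product A o B: ground set 'I_n * X (copy i of X is {i} * X).
   F is in A o B iff for some B in B, the trace of F on copy i is a member
   of A for i in B and empty for i outside B. *)
Definition wreath (X : finType) (n : nat) (A : {set {set X}}) (B : {set {set 'I_n}})
  : {set {set ('I_n * X)}} :=
  [set F : {set ('I_n * X)} | [exists Bs in B, forall i : 'I_n,
     if i \in Bs then [set x | (i, x) \in F] \in A
     else [set x | (i, x) \in F] == set0]].

Definition binom_set (n r : nat) : {set {set 'I_n}} := [set B : {set 'I_n} | #|B| == r].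

(* [6] is represented by 'I_6, element a of [6] by the ordinal a-1 *)
Definition tri (a b c : nat) : {set 'I_6} :=
  [set (inord a.-1 : 'I_6); inord b.-1; inord c.-1].

Definition T0 : {set {set 'I_6}} :=
  [set tri 1 2 3; tri 1 2 4; tri 3 4 5; tri 3 4 6; tri 1 5 6;
       tri 2 5 6; tri 1 3 5; tri 2 4 5; tri 1 4 6; tri 2 3 6].

Definition F0 : {set {set ('I_3 * 'I_6)}} := wreath T0 (binom_set 3 2).

(* Main.v *)
Require Import Defs.
From mathcomp Require Import all_boot.
From mathcomp Require Import zify.
Set Implicit Arguments. Unset Strict Implicit.

Definition bits (A : {set 'I_6}) := [seq i \in A | i <- enum 'I_6].
Definition andl (s u : seq bool) := [seq x.1 && x.2 | x <- zip s u].
Definition disjb (s u : seq bool) := count id (andl s u) == 0.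

Lemma card_bits (A : {set 'I_6}) : #|A| = count id (bits A).
Proof. by rewrite cardE /enum_mem size_filter count_map -enumT; apply: eq_count. Qed.

Lemma zip_map2 (T U V : Type) (f : T -> U) (g : T -> V) s :
  zip (map f s) (map g s) = map (fun x => (f x, g x)) s.
Proof. by elim: s => //= x s ->. Qed.


Definition P6 : seq 'I_6 := [:: @Ordinal 6 0 isT; @Ordinal 6 1 isT; @Ordinal 6 2 isT;
  @Ordinal 6 3 isT; @Ordinal 6 4 isT; @Ordinal 6 5 isT].
Lemma enum6 : enum 'I_6 = P6.
Proof. by apply: (inj_map val_inj); rewrite val_enum_ord. Qed.

Lemma eq_inord (i : 'I_6) k : k < 6 -> (i == inord k) = (val i == k).
Proof. by move=> hk; rewrite -val_eqE /= inordK. Qed.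

Lemma bits_tri a b c : a.-1 < 6 -> b.-1 < 6 -> c.-1 < 6 -> bits (tri a b c) =
  [seq [|| val i == a.-1, val i == b.-1 | val i == c.-1] | i <- P6].
Proof.
move=> ha hb hc; rewrite /bits enum6; apply: eq_map => i.
by rewrite !inE !eq_inord // orbA.
Qed.


Lemma disj_bits (A B : {set 'I_6}) : [disjoint A & B] = disjb (bits A) (bits B).
Proof.
rewrite /disjoint /pred0b /disjb; congr (_ == 0).
rewrite cardE /enum_mem size_filter /andl /bits zip_map2 -map_comp count_map enumT.
by apply: eq_count.
Qed.

Definition Tl : seq {set 'I_6} := [:: tri 1 2 3; tri 1 2 4; tri 3 4 5; tri 3 4 6; tri 1 5 6;
       tri 2 5 6; tri 1 3 5; tri 2 4 5; tri 1 4 6; tri 2 3 6].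
Definition t (k : 'I_10) : {set 'I_6} := nth set0 Tl k.
Definition bt a b c : seq bool :=
  [seq [|| val i == a.-1, val i == b.-1 | val i == c.-1] | i <- P6].
Definition BL : seq (seq bool) := [:: bt 1 2 3; bt 1 2 4; bt 3 4 5; bt 3 4 6; bt 1 5 6;
       bt 2 5 6; bt 1 3 5; bt 2 4 5; bt 1 4 6; bt 2 3 6].

Lemma bits_t k : bits (t k) = nth [::] BL k.
Proof.
by case: k => [[|[|[|[|[|[|[|[|[|[|//]]]]]]]]]] Hk] /=; rewrite /t /= bits_tri.
Qed.

Lemma nthBL (k : 'I_10) : nth [::] BL k \in BL.
Proof. exact: mem_nth. Qed.

Lemma card_t k : #|t k| = 3.
Proof.
rewrite card_bits bits_t.
have : all (fun b => count id b == 3) BL by vm_compute.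
by move/allP/(_ _ (nthBL k))/eqP.
Qed.

Lemma t_neq0 k : t k != set0.
Proof. by apply/negP => /eqP h; have := card_t k; rewrite h cards0. Qed.

Lemma t_inj : injective t.
Proof.
move=> k l /(congr1 bits); rewrite !bits_t => /eqP.
by rewrite nth_uniq // => /eqP/val_inj.
Qed.

Lemma t_int k l : ~~ [disjoint t k & t l].
Proof.
rewrite disj_bits !bits_t.
have : all (fun b => all (fun c => ~~ disjb b c) BL) BL by vm_compute.
by move/allP/(_ _ (nthBL k))/allP/(_ _ (nthBL l)).
Qed.

Lemma memT0 X : X \in T0 <-> exists k, X = t k.
Proof.
have -> : (X \in T0) = (X \in Tl) by rewrite /Tl !inE ?in_nil ?orbF !orbA.
split.
  case/(nthP set0) => i hi <-; by exists (Ordinal hi).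
by case=> k ->; apply: mem_nth.
Qed.

Lemma T0_card X : X \in T0 -> #|X| = 3.
Proof. by case/memT0 => k ->; apply: card_t. Qed.

Lemma T0_int X Y : X \in T0 -> Y \in T0 -> ~~ [disjoint X & Y].
Proof. by case/memT0 => k -> /memT0 [l ->]; apply: t_int. Qed.

Lemma t_in k : t k \in T0.
Proof. by apply/memT0; exists k. Qed.

Definition Dk (A : {set 'I_6}) := [set k : 'I_10 | [disjoint t k & A]].
Definition cntD (s : seq bool) := count (fun b => disjb b s) BL.

Lemma card_Dk A : #|Dk A| = cntD (bits A).
Proof.
rewrite cardE /enum_mem size_filter -enumT /cntD.
rewrite (eq_count (a2 := (fun b => disjb b (bits A)) \o (nth [::] BL \o val))); last first.
  by move=> k; rewrite /= inE disj_bits bits_t.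
rewrite -count_map map_comp val_enum_ord.
by rewrite -[10]/(size BL) -/(mkseq _ _) mkseq_nth.
Qed.

Fixpoint allbits n : seq (seq bool) :=
  if n is n'.+1 then [seq b :: s | b <- [:: true; false], s <- allbits n'] else [:: [::]].

Lemma allbitsP n s : size s = n -> s \in allbits n.
Proof.
elim: n s => [|n IH] [|b s] //= [hs].
by rewrite !mem_cat; case: b; [apply/orP; left | apply/orP; right; apply/orP; left]; apply/mapP; exists s => //; apply: IH.
Qed.

Lemma size_bits A : size (bits A) = 6.
Proof. by rewrite size_map enum6. Qed.

Definition g n := match n with 0 => 10 | 1 => 5 | 2 => 2 | _ => 0 end.

Lemma Dk_g (A : {set 'I_6}) : g #|A| <= #|Dk A|.
Proof.
rewrite card_Dk card_bits.
have : all (fun s => g (count id s) <= cntD s) (allbits 6) by vm_compute.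
by move/allP/(_ _ (allbitsP (size_bits A))).
Qed.

Lemma Dk_0 (A : {set 'I_6}) : #|Dk A| = 0 -> 2 < #|A|.
Proof.
rewrite card_Dk card_bits.
have : all (fun s => (cntD s == 0) ==> (2 < count id s)) (allbits 6) by vm_compute.
by move/allP/(_ _ (allbitsP (size_bits A)))/implyP => h /eqP /h.
Qed.

Lemma Dk_set0 : #|Dk set0| = 10.
Proof.
rewrite card_Dk (_ : bits set0 = nseq 6 false); first by vm_compute.
by rewrite /bits enum6 /= !inE.
Qed.

Lemma Dk_t0 : #|Dk (t (@Ordinal 10 0 isT))| = 0.
Proof. by rewrite card_Dk bits_t; vm_compute. Qed.

Definition o0 : 'I_3 := @Ordinal 3 0 isT.
Definition o1 : 'I_3 := @Ordinal 3 1 isT.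
Definition o2 : 'I_3 := @Ordinal 3 2 isT.

Lemma ord3 (P : 'I_3 -> Prop) : P o0 -> P o1 -> P o2 -> forall i, P i.
Proof.
move=> h0 h1 h2 [[|[|[|//]]] Hi].
- by have -> : Ordinal Hi = o0 by apply: val_inj.
- by have -> : Ordinal Hi = o1 by apply: val_inj.
- by have -> : Ordinal Hi = o2 by apply: val_inj.
Qed.

Definition tr (i : 'I_3) (E : {set 'I_3 * 'I_6}) : {set 'I_6} := [set x | (i, x) \in E].
Definition sel (X0 X1 X2 : {set 'I_6}) (i : 'I_3) :=
  if val i == 0 then X0 else if val i == 1 then X1 else X2.
Definition glue X0 X1 X2 : {set 'I_3 * 'I_6} := [set p | p.2 \in sel X0 X1 X2 p.1].

Lemma tr_glue X0 X1 X2 i : tr i (glue X0 X1 X2) = sel X0 X1 X2 i.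
Proof. by apply/setP => x; rewrite !inE. Qed.

Lemma glue_tr E : E = glue (tr o0 E) (tr o1 E) (tr o2 E).
Proof.
apply/setP => -[i x]; rewrite !inE /=; move: i; by apply: ord3; rewrite /= inE.
Qed.

Lemma sum3 (F : 'I_3 -> nat) : \sum_(i < 3) F i = F o0 + F o1 + F o2.
Proof.
rewrite !big_ord_recl big_ord0 addn0 addnA.
by congr (F _ + F _ + F _); apply: val_inj.
Qed.

Lemma card_tr (E : {set 'I_3 * 'I_6}) : #|E| = #|tr o0 E| + #|tr o1 E| + #|tr o2 E|.
Proof.
have H i : #|tr i E| = \sum_(x : 'I_6) ((i, x) \in E).
  rewrite -sum1_card big_mkcond; apply: eq_bigr => x _; rewrite inE.
  by case: ((i, x) \in E).
rewrite !H -(sum3 (fun i => \sum_(x : 'I_6) ((i, x) \in E))).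
rewrite pair_big /= -sum1_card big_mkcond; apply: eq_bigr => -[i x] _ /=.
by case: ((i, x) \in E).
Qed.

Lemma card_glue X0 X1 X2 : #|glue X0 X1 X2| = #|X0| + #|X1| + #|X2|.
Proof. by rewrite card_tr !tr_glue. Qed.

Lemma disjointP (T : finType) (A B : {set T}) :
  reflect (forall x, x \in A -> x \in B -> False) [disjoint A & B].
Proof.
rewrite disjoints_subset; apply: (iffP subsetP) => H x hA.
  by move=> hB; have := H x hA; rewrite inE hB.
by rewrite inE; apply/negP => hB; exact: H x hA hB.
Qed.

Lemma disj_glue X0 X1 X2 Y0 Y1 Y2 :
  [disjoint glue X0 X1 X2 & glue Y0 Y1 Y2] =
  [&& [disjoint X0 & Y0], [disjoint X1 & Y1] & [disjoint X2 & Y2]].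
Proof.
apply/disjointP/and3P.
  move=> H; split; apply/disjointP => x h1 h2.
  - by apply: (H (o0, x)); rewrite inE.
  - by apply: (H (o1, x)); rewrite inE.
  - by apply: (H (o2, x)); rewrite inE.
case=> h0 h1 h2 [i x]; rewrite !inE /=; move: i; apply: ord3; rewrite /sel /=.
- by move/disjointP: h0; apply.
- by move/disjointP: h1; apply.
- by move/disjointP: h2; apply.
Qed.

Lemma disj_glueS X0 X1 X2 (S : {set 'I_3 * 'I_6}) :
  [disjoint glue X0 X1 X2 & S] =
  [&& [disjoint X0 & tr o0 S], [disjoint X1 & tr o1 S] & [disjoint X2 & tr o2 S]].
Proof. by rewrite {1}(glue_tr S) disj_glue. Qed.

Lemma disj0 (X : {set 'I_6}) : [disjoint X & set0].
Proof. by apply/disjointP => x _; rewrite inE. Qed.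

Lemma disj0l (X : {set 'I_6}) : [disjoint set0 & X].
Proof. by apply/disjointP => x; rewrite inE. Qed.

Lemma binom32 Bs : Bs \in binom_set 3 2 -> exists k, Bs = ~: [set k].
Proof.
rewrite inE => /eqP h.
have : #|~: Bs| == 1 by have := cardsC Bs; rewrite card_ord h => e; apply/eqP; lia.
by case/cards1P => k hk; exists k; rewrite -hk setCK.
Qed.

Definition shape (E : {set 'I_3 * 'I_6}) (k : 'I_3) :=
  forall i, if i != k then is_true (tr i E \in T0) else tr i E = set0.

Lemma F0P E : E \in F0 <-> exists k, shape E k.
Proof.
rewrite inE; split.
  case/existsP => Bs /andP[/binom32 [k ->] /forallP H]; exists k => i.
  by have := H i; rewrite !inE; case: (i != k) => // /eqP.
case=> k H; apply/existsP; exists (~: [set k]).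
rewrite inE cardsC1 card_ord eqxx /=; apply/forallP => i; rewrite in_setC in_set1.
by have := H i; case: (i != k) => h; [exact: h | apply/eqP].
Qed.

Lemma set0_notin : set0 \notin T0.
Proof. by apply/negP => /memT0 [k hk]; move: (t_neq0 k); rewrite -hk eqxx. Qed.

Section J.
Variable S : {set 'I_3 * 'I_6}.
Definition J01 := [set glue (t kl.1) (t kl.2) set0 | kl in setX (Dk (tr o0 S)) (Dk (tr o1 S))].
Definition J02 := [set glue (t kl.1) set0 (t kl.2) | kl in setX (Dk (tr o0 S)) (Dk (tr o2 S))].
Definition J12 := [set glue set0 (t kl.1) (t kl.2) | kl in setX (Dk (tr o1 S)) (Dk (tr o2 S))].

Lemma disjF0 : [set E in F0 | [disjoint E & S]] = J01 :|: J02 :|: J12.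
Proof.
apply/setP => E; rewrite in_set !in_setU; apply/andP/idP.
  case=> /F0P [k H] hd; rewrite (glue_tr E) in hd *; move: hd.
  rewrite disj_glueS => /and3P[d0 d1 d2].
  move: k H; apply: ord3 => H; have h0 := H o0; have h1 := H o1; have h2 := H o2;
    rewrite /= in h0 h1 h2.
  - case/memT0: h1 => a ha; case/memT0: h2 => b hb.
    rewrite h0 ha hb; apply/orP; right; apply/imsetP; exists (a, b) => //.
    by rewrite !inE -ha -hb d1 d2.
  - case/memT0: h0 => a ha; case/memT0: h2 => b hb.
    rewrite h1 ha hb; apply/orP; left; apply/orP; right; apply/imsetP; exists (a, b) => //.
    by rewrite !inE -ha -hb d0 d2.
  - case/memT0: h0 => a ha; case/memT0: h1 => b hb.
    rewrite h2 ha hb; apply/orP; left; apply/orP; left; apply/imsetP; exists (a, b) => //.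
    by rewrite !inE -ha -hb d0 d1.
case/orP => [/orP[]|] /imsetP [[a b]] /setXP [/= ha hb] -> {E}; rewrite !inE in ha hb;
  rewrite disj_glueS ?ha ?hb ?disj0 ?disj0l; split => //; apply/F0P.
- by exists o2; apply: ord3; rewrite /= tr_glue /sel /= ?t_in.
- by exists o1; apply: ord3; rewrite /= tr_glue /sel /= ?t_in.
- by exists o0; apply: ord3; rewrite /= tr_glue /sel /= ?t_in.
Qed.
End J.

Lemma cardsU_disj (T : finType) (A B : {set T}) :
  A :&: B = set0 -> #|A :|: B| = #|A| + #|B|.
Proof. by move=> h; rewrite cardsU h cards0 subn0. Qed.

Lemma card_J (S : {set 'I_3 * 'I_6}) :
  #|[set E in F0 | [disjoint E & S]]| =
  #|Dk (tr o0 S)| * #|Dk (tr o1 S)| + #|Dk (tr o0 S)| * #|Dk (tr o2 S)|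
  + #|Dk (tr o1 S)| * #|Dk (tr o2 S)|.
Proof.
have P01 E : E \in J01 S -> tr o2 E = set0 /\ tr o1 E \in T0.
  by case/imsetP => -[a b] _ ->; rewrite !tr_glue /sel /= t_in.
have P02 E : E \in J02 S -> tr o1 E = set0 /\ tr o2 E \in T0.
  by case/imsetP => -[a b] _ ->; rewrite !tr_glue /sel /= t_in.
have P12 E : E \in J12 S -> tr o0 E = set0 /\ tr o2 E \in T0.
  by case/imsetP => -[a b] _ ->; rewrite !tr_glue /sel /= t_in.
have P12' E : E \in J12 S -> tr o1 E \in T0.
  by case/imsetP => -[a b] _ ->; rewrite !tr_glue /sel /= t_in.
have P02' E : E \in J02 S -> tr o0 E \in T0.
  by case/imsetP => -[a b] _ ->; rewrite !tr_glue /sel /= t_in.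
rewrite disjF0 cardsU_disj; last first.
  rewrite setIUl; apply/eqP; rewrite setU_eq0; apply/andP; split;
    apply/eqP/setP => E; rewrite !inE; apply/negP => /andP[].
  - by case/P01 => h _ /P12 [_ h']; move: set0_notin; rewrite -h h'.
  - by case/P02 => h _ /P12' h'; move: set0_notin; rewrite -h h'.
rewrite cardsU_disj; last first.
  apply/setP => E; rewrite !inE; apply/negP => /andP[].
  by case/P01 => h _ /P02 [_ h']; move: set0_notin; rewrite -h h'.
rewrite !card_imset ?cardsX //.
- move=> [a b] [a' b'] /= H.
  have h1 := congr1 (tr o1) H; have h2 := congr1 (tr o2) H.
  by rewrite !tr_glue /sel /= in h1 h2; rewrite (t_inj h1) (t_inj h2).
- move=> [a b] [a' b'] /= H.
  have h1 := congr1 (tr o0) H; have h2 := congr1 (tr o2) H.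
  by rewrite !tr_glue /sel /= in h1 h2; rewrite (t_inj h1) (t_inj h2).
- move=> [a b] [a' b'] /= H.
  have h1 := congr1 (tr o0) H; have h2 := congr1 (tr o1) H.
  by rewrite !tr_glue /sel /= in h1 h2; rewrite (t_inj h1) (t_inj h2).
Qed.

Lemma ar1 a0 a1 a2 : a0 + a1 + a2 = 5 -> 20 <= g a0 * g a1 + g a0 * g a2 + g a1 * g a2.
Proof.
by case: a0 => [|[|[|a0]]]; case: a1 => [|[|[|a1]]]; case: a2 => [|[|[|a2]]] => /= h; lia.
Qed.

Lemma ar2 d0 d1 d2 a0 a1 a2 : d0 * d1 + d0 * d2 + d1 * d2 = 0 ->
  (d0 = 0 -> 2 < a0) -> (d1 = 0 -> 2 < a1) -> (d2 = 0 -> 2 < a2) -> 6 <= a0 + a1 + a2.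
Proof.
case: d0 => [|d0]; case: d1 => [|d1]; case: d2 => [|d2] => h h0 h1 h2;
  try (have := h0 erefl); try (have := h1 erefl); try (have := h2 erefl); nia.
Qed.

Lemma bigmin_le (I : finType) (P : pred I) (F : I -> nat) x j :
  P j -> \big[minn/x]_(i | P i) F i <= F j.
Proof.
move=> hP; have : j \in index_enum I by rewrite mem_index_enum.
elim: (index_enum I) => // a r IH; rewrite inE big_cons => /orP [/eqP <- | hj].
  by rewrite hP geq_minl.
by case: (P a); rewrite ?geq_min IH ?orbT.
Qed.

Lemma tr0 i : tr i set0 = set0.
Proof. by apply/setP => x; rewrite !inE. Qed.

Lemma F0_card : #|F0| = 300.
Proof.
have eF : [set E in F0 | [disjoint E & set0]] = F0.
  apply/setP => E; rewrite in_set; case: (E \in F0) => //=.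
  by apply/disjointP => x _; rewrite inE.
by rewrite -eF card_J !tr0 Dk_set0.
Qed.

Lemma common (k k' : 'I_3) : exists i, (i != k) && (i != k').
Proof.
move: k k'; apply: ord3; apply: ord3; by [exists o0 | exists o1 | exists o2].
Qed.

Lemma F0_unif : uniform 6 F0.
Proof.
move=> E /F0P [k H]; rewrite card_tr.
move: k H; apply: ord3 => H; have h0 := H o0; have h1 := H o1; have h2 := H o2;
  rewrite /= in h0 h1 h2.
- by rewrite h0 cards0 (T0_card h1) (T0_card h2).
- by rewrite h1 cards0 (T0_card h0) (T0_card h2).
- by rewrite h2 cards0 (T0_card h0) (T0_card h1).
Qed.

Lemma F0_int : intersecting F0.
Proof.
move=> E E' /F0P [k H] /F0P [k' H'].
have [i /andP [hk hk']] := common k k'.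
have := H i; have := H' i; rewrite hk hk' => h' h.
apply/negP => hd; apply: (negP (T0_int h h')); apply/disjointP => x.
rewrite !inE => h1 h2; exact: (disjointP _ _ hd (i, x) h1 h2).
Qed.

Lemma cover_empty (S : {set 'I_3 * 'I_6}) :
  [forall E in F0, ~~ [disjoint E & S]] -> #|[set E in F0 | [disjoint E & S]]| = 0.
Proof.
move/forall_inP => H; apply/eqP; rewrite cards_eq0; apply/negPn/negP.
case/set0Pn => E; rewrite in_set => /andP [h1 h2]; by move: (H E h1); rewrite h2.
Qed.

Lemma F0_tau : tau F0 = 6.
Proof.
apply/eqP; rewrite eqn_leq; apply/andP; split.
  pose S6 := glue (t (@Ordinal 10 0 isT)) (t (@Ordinal 10 0 isT)) set0.
  have hc : [forall E in F0, ~~ [disjoint E & S6]].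
    have h0 : #|[set E in F0 | [disjoint E & S6]]| = 0.
      by rewrite card_J !tr_glue /sel /= Dk_t0.
    apply/forall_inP => E hE; apply/negP => hd.
    have : E \in [set E in F0 | [disjoint E & S6]] by rewrite in_set hE hd.
    by move/cards0_eq: h0 => ->; rewrite inE.
  rewrite /tau; apply: leq_trans (bigmin_le (fun S : {set 'I_3 * 'I_6} => #|S|) _ hc) _.
  by rewrite card_glue !card_t cards0.
rewrite /tau; elim/big_ind: _ => //.
- by rewrite card_prod !card_ord.
- by move=> x y hx hy; rewrite leq_min hx hy.
move=> S /cover_empty; rewrite card_J card_tr => h.
by apply: (ar2 h) => /Dk_0.
Qed.

Lemma F0_gamma : 20 <= gamma 5 F0.
Proof.
rewrite /gamma; elim/big_ind: _ => //.
- by rewrite F0_card.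
- by move=> x y hx hy; rewrite leq_min hx hy.
move=> S /eqP hS; rewrite card_J; rewrite card_tr in hS.
apply: leq_trans (ar1 hS) _.
by rewrite !leq_add ?leq_mul ?Dk_g.
Qed.

Theorem proposition5p8 :
  m_ge 5 6 20 /\
  [/\ uniform 6 F0, #|F0| = 300, intersecting F0, tau F0 = 6 & 20 <= gamma 5 F0].
Proof.
split; last by split; [exact: F0_unif | exact: F0_card | exact: F0_int | exact: F0_tau | exact: F0_gamma].
exists (('I_3 * 'I_6)%type : finType), F0.
by split; [exact: F0_unif | exact: F0_int | exact: F0_tau | exact: F0_gamma].
Qed.
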